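(* Let Assumptions (A1) and (A3) below hold. Then there exists $\alpha_1\in\mathcal K_\infty$ such that for all $\varepsilon>0$, all $T\in\mathbb{N}$, all $\hat x\in\mathbb{X}$ and all $\hat u\in\mathbb{U}^T(\hat x)$ with $\|(x_{\hat u}(k,\hat x),\hat u(k))\|_{\Pi^\star}\le\varepsilon$ for all $k\in\{0,\dots,T-1\}$, $$\sum_{k=0}^{T-1}\ell(x_{\hat u}(k,\hat x),\hat u(k))\le(T+p^\star-1)\ell^\star+T\alpha_1(\varepsilon).$$
   Context: System $x(k+1)=f(x(k),u(k))$ with constraint sets $\mathbb{X}\subset\mathbb{R}^n$, $\mathbb{U}\subset\mathbb{R}^m$ and stage cost $\ell:\mathbb{X}\times\mathbb{U}\to\mathbb{R}$, which is assumed non-negative. For $u\in\mathbb{U}^T$, $x_u(0,x)=x$, $x_u(k+1,x)=f(x_u(k,x),u(k))$; $\mathbb{U}^T(x)$ is the set of $u\in\mathbb{U}^T$ with $x_u(k,x)\in\mathbb{X}$ for $k=0,\dots,T$. A feasible $p$-periodic orbit is $\Pi\in(\mathbb{X}\times\mathbb{U})^p$ with $\Pi_\mathbb{X}([k+1]_p)=f(\Pi(k))$ ($[k]_p$ = $k$ mod $p$); $\|(x,u)\|_\Pi:=\min_k\|(x,u)-\Pi(k)\|$; $\ell^\star:=\inf$ over all feasible periodic orbits of $\frac1p\sum_{k=0}^{p-1}\ell(\Pi(k))$; $\Pi^\star$ is a fixed feasible $p^\star$-periodic orbit attaining $\ell^\star$. (A1) $f,\ell$ continuous, $\mathbb{X},\mathbb{U}$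 compact. (A3) There are $\lambda:\mathbb{X}\to\mathbb{R}$, $\bar\lambda$ with $|\lambda|\le\bar\lambda$ on $\mathbb{X}$, and $\underline\alpha_{\tilde\ell}\in\mathcal K_\infty$ with $\ell(x,u)-\ell^\star+\lambda(x)-\lambda(f(x,u))\ge\underline\alpha_{\tilde\ell}(\|(x,u)\|_{\Pi^\star})$ for all $x\in\mathbb{X}$, $u\in\mathbb{U}^1(x)$. *)

(* Defs.v *)
From HB Require Import structures.
From mathcomp Require Import all_boot all_order all_algebra.
From mathcomp Require Import all_classical all_reals all_analysis.
Set Implicit Arguments. Unset Strict Implicit. Unset Printing Implicit Defensive.
Import Order.TTheory GRing.Theory Num.Theory.
Import numFieldNormedType.Exports.
Local Open Scope classical_set_scope.
Local Open Scope ring_scope.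

Section Defs.
Variables (R : realType) (n m : nat).
Local Notation st := 'rV[R]_n.
Local Notation inp := 'rV[R]_m.

Definition Kinf (a : R -> R) : Prop :=
  [/\ a 0 = 0,
      {within `[0, +oo[%classic, continuous a},
      {in `[0, +oo[ &, forall s t, s < t -> a s < a t} &
      (forall M : R, exists s, 0 <= s /\ M <= a s)].

Fixpoint traj (f : st -> inp -> st) (u : nat -> inp) (x : st) (k : nat) : st :=
  match k with
  | 0 => x
  | k'.+1 => f (traj f u x k') (u k')
  end.

Definition admissible (f : st -> inp -> st) (X : set st) (U : set inp)
  (T : nat) (x : st) (u : nat -> inp) : Prop :=
  (forall k, (k < T)%N -> U (u k)) /\ (forall k, (k <= T)%N -> X (traj f u x k)).

(* feasible p-periodic orbit Pi(0), ..., Pi(p-1) (only indices < p matter) *)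
Definition feas_orbit (f : st -> inp -> st) (X : set st) (U : set inp)
  (p : nat) (Pi : nat -> st * inp) : Prop :=
  (0 < p)%N /\
  (forall k, (k < p)%N -> X (Pi k).1 /\ U (Pi k).2) /\
  (forall k, (k < p)%N -> (Pi ((k.+1) %% p)%N).1 = f (Pi k).1 (Pi k).2).

Definition avg_cost (ell : st -> inp -> R) (p : nat) (Pi : nat -> st * inp) : R :=
  p%:R^-1 * \sum_(k < p) ell (Pi k).1 (Pi k).2.

Definition ell_star (f : st -> inp -> st) (X : set st) (U : set inp)
  (ell : st -> inp -> R) : R :=
  inf [set r | exists p Pi, feas_orbit f X U p Pi /\ r = avg_cost ell p Pi].

Definition pnorm (x : st) (u : inp) : R := `| row_mx x u |.

Definition orbit_dist (p : nat) (Pi : nat -> st * inp) (x : st) (u : inp) : R :=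
  \big[Num.min/pnorm (x - (Pi 0%N).1) (u - (Pi 0%N).2)]_(k < p)
     pnorm (x - (Pi k).1) (u - (Pi k).2).

End Defs.

(* Main.v *)
Require Import Defs.
From HB Require Import structures.
From mathcomp Require Import all_boot all_order all_algebra.
From mathcomp Require Import all_classical all_reals all_analysis.
From mathcomp Require Import lra zify.
Import Order.TTheory GRing.Theory Num.Theory.
Import numFieldNormedType.Exports.
Local Open Scope classical_set_scope.
Local Open Scope ring_scope.


Lemma pnorm_ge1 (R : realType) (n m : nat) (x : 'rV[R]_n) (u : 'rV[R]_m) : `|x| <= pnorm x u.
Proof.
rewrite /pnorm.
have -> : `|x| = mx_norm x by [].
have -> : `|row_mx x u| = mx_norm (row_mx x u) by [].
rewrite !mx_normrE.
apply: bigmax_le.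
  exact: bigmax_ge_id.
move=> [i j] _ /=.
have -> : x i j = row_mx x u i (lshift m j) by rewrite row_mxEl.
exact: (le_bigmax _ (fun ij : 'I_1 * 'I_(n + m) => `|row_mx x u ij.1 ij.2|) (i, lshift m j)).
Qed.

Lemma pnorm_ge2 (R : realType) (n m : nat) (x : 'rV[R]_n) (u : 'rV[R]_m) : `|u| <= pnorm x u.
Proof.
rewrite /pnorm.
have -> : `|u| = mx_norm u by [].
have -> : `|row_mx x u| = mx_norm (row_mx x u) by [].
rewrite !mx_normrE.
apply: bigmax_le.
  exact: bigmax_ge_id.
move=> [i j] _ /=.
have -> : u i j = row_mx x u i (rshift n j) by rewrite row_mxEr.
exact: (le_bigmax _ (fun ij : 'I_1 * 'I_(n + m) => `|row_mx x u ij.1 ij.2|) (i, rshift n j)).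
Qed.

Lemma pnorm_ge0 (R : realType) (n m : nat) (x : 'rV[R]_n) (u : 'rV[R]_m) : 0 <= pnorm x u.
Proof. exact: normr_ge0. Qed.

Lemma pnorm_eq0 (R : realType) (n m : nat) (x : 'rV[R]_n) (u : 'rV[R]_m) : pnorm x u = 0 -> x = 0 /\ u = 0.
Proof.
move=> h; split; apply/eqP; rewrite -normr_eq0 eq_le normr_ge0 andbT -h.
  exact: pnorm_ge1.
exact: pnorm_ge2.
Qed.

Lemma cont_pt (R : realType) (n m : nat) (W : normedModType R) (X : set 'rV[R]_n) (U : set 'rV[R]_m)
  (g : 'rV[R]_n * 'rV[R]_m -> W) :
  {within X `*` U, continuous g} -> forall w, X w.1 -> U w.2 -> forall e, 0 < e ->
  exists2 d, 0 < d & forall x u, X x -> U u -> pnorm (x - w.1) (u - w.2) < d ->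
     `|g (x, u) - g w| < e.
Proof.
move=> /subspace_continuousP cg w Xw Uw e e0.
have := cg w (conj Xw Uw).
move/cvgrPdist_lt => /(_ e e0).
rewrite /within /=.
move/nbhs_normP => [d d0 H].
exists d => // x u Xx Uu zw.
rewrite distrC.
apply: (H (x, u)) => //=.
rewrite -normrN opprB prod_normE /= gt_max.
by rewrite (le_lt_trans (pnorm_ge1 _ _ _ _ _) zw) (le_lt_trans (pnorm_ge2 _ _ _ _ _) zw).
Qed.


Lemma fin_delta (R : realType) (N : nat) (P : nat -> R -> Prop) :
  (forall i d d', 0 < d' -> d' <= d -> P i d -> P i d') ->
  (forall i, (i < N)%N -> exists2 d, 0 < d & P i d) ->
  exists2 d, 0 < d & forall i, (i < N)%N -> P i d.
Proof.
move=> Pdown; elim: N => [|N IH] H.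
  by exists 1 => //.
have [d d0 Hd] := IH (fun i iN => H i (ltn_trans iN (ltnSn N))).
have [d' d'0 Hd'] := H N (ltnSn N).
exists (Num.min d d'); first by rewrite lt_min d0 d'0.
move=> i; rewrite ltnS leq_eqVlt => /orP [/eqP -> | iN].
  by apply: Pdown Hd'; rewrite ?lt_min ?d0 ?d'0 // ge_min lexx orbT.
by apply: Pdown (Hd i iN); rewrite ?lt_min ?d0 ?d'0 // ge_min lexx.
Qed.

Definition bterm {R : realType} {n m : nat} (ell : 'rV[R]_n -> 'rV[R]_m -> R)
  (Pi : nat -> 'rV[R]_n * 'rV[R]_m) (i : nat) (x : 'rV[R]_n) (u : 'rV[R]_m) (e : R) : R :=
  Num.max 0 (ell x u - ell (Pi i).1 (Pi i).2) *
  Num.min 1 (e / pnorm (x - (Pi i).1) (u - (Pi i).2)).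

Definition bset {R : realType} {n m : nat} (ell : 'rV[R]_n -> 'rV[R]_m -> R)
  (X : set 'rV[R]_n) (U : set 'rV[R]_m) (p : nat)
  (Pi : nat -> 'rV[R]_n * 'rV[R]_m) (e : R) : set R :=
  [set r | r = 0 \/ exists i x u, [/\ (i < p)%N, X x, U u & r = bterm ell Pi i x u e]].

Definition beta {R : realType} {n m : nat} (ell : 'rV[R]_n -> 'rV[R]_m -> R)
  (X : set 'rV[R]_n) (U : set 'rV[R]_m) (p : nat)
  (Pi : nat -> 'rV[R]_n * 'rV[R]_m) (e : R) : R := sup (bset ell X U p Pi e).

Lemma min1_scale (R : realType) (r a : R) : 1 <= r -> Num.min 1 (r * a) <= r * Num.min 1 a.
Proof.
move=> r1; case: (lerP a 1) => a1.
  rewrite ge_min; apply/orP; right.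
  by rewrite ler_wpM2l ?ge_min ?lexx ?orbT //; apply: le_trans r1.
by rewrite mulr1 ge_min r1.
Qed.

Lemma min1_max0 (R : realType) (t : R) : Num.min 1 t <= Num.max 0 t.
Proof.
apply: (@le_trans _ _ t).
  by rewrite ge_min; apply/orP; right.
by rewrite le_max; apply/orP; right.
Qed.

Section BetaProps.
End BetaProps.

Lemma beta_props (R : realType) (n m : nat) (ell : 'rV[R]_n -> 'rV[R]_m -> R)
  (X : set 'rV[R]_n) (U : set 'rV[R]_m) (p : nat)
  (Pi : nat -> 'rV[R]_n * 'rV[R]_m) (L : R) :
  0 <= L ->
  (forall x u, X x -> U u -> 0 <= ell x u) ->
  (forall x u, X x -> U u -> ell x u <= L) ->
  (forall i, (i < p)%N -> X (Pi i).1 /\ U (Pi i).2) ->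
  let b := beta ell X U p Pi in
  (forall e, has_sup (bset ell X U p Pi e)) /\
      (forall e, 0 <= b e) /\
      (forall e, b e <= L) /\
      (forall e, e <= 0 -> b e = 0) /\
      (forall x y, 0 < x -> x <= y -> b y <= (y / x) * b x) /\
      (forall x y, x <= y -> b x <= b y) /\
      (forall i x u e, (i < p)%N -> X x -> U u ->
          pnorm (x - (Pi i).1) (u - (Pi i).2) <= e ->
          ell x u <= ell (Pi i).1 (Pi i).2 + b e).
Proof.
move=> L0 ge0 leL hPi b.
have termL : forall i x u e, (i < p)%N -> X x -> U u -> bterm ell Pi i x u e <= L.
  move=> i x u e ip Xx Uu; rewrite /bterm.
  have [XP UP] := hPi i ip.
  have h1 : 0 <= Num.max 0 (ell x u - ell (Pi i).1 (Pi i).2).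
    by rewrite le_max lexx.
  have h2 : Num.min 1 (e / pnorm (x - (Pi i).1) (u - (Pi i).2)) <= 1.
    by rewrite ge_min lexx.
  apply: (le_trans (ler_piMr h1 h2)).
  rewrite ge_max L0 /=.
  have := ge0 _ _ XP UP; have := leL _ _ Xx Uu; lra.
have hs : forall e, has_sup (bset ell X U p Pi e).
  move=> e; split; first by exists 0; left.
  exists L => r [->|[i [x [u [ip Xx Uu ->]]]]] //.
  exact: termL.
have b0 : forall e, 0 <= b e.
  by move=> e; apply: sup_upper_bound (hs e) _ _; left.
have bterm_le : forall i x u e, (i < p)%N -> X x -> U u -> bterm ell Pi i x u e <= b e.
  by move=> i x u e ip Xx Uu; apply: sup_upper_bound (hs e) _ _; right; exists i, x, u.
have bub : forall e M, 0 <= M -> (forall i x u, (i < p)%N -> X x -> U u ->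
    bterm ell Pi i x u e <= M) -> b e <= M.
  move=> e M M0 H; apply: ge_sup; first by exists 0; left.
  by move=> r [->|[i [x [u [ip Xx Uu ->]]]]] //; apply: H.
split => //; split => //; split.
- by move=> e; apply: bub => // i x u ip Xx Uu; apply: termL.
split.
- move=> e e0; apply/eqP; rewrite eq_le b0 andbT; apply: bub => // i x u ip Xx Uu.
  rewrite /bterm; apply: mulr_ge0_le0; first by rewrite le_max lexx.
  apply: (@le_trans _ _ (e / pnorm (x - (Pi i).1) (u - (Pi i).2))).
    by rewrite ge_min lexx orbT.
  by apply: mulr_le0_ge0 => //; rewrite invr_ge0 pnorm_ge0.
split.
  move=> s t s0 st; apply: bub.
    by apply: mulr_ge0; [apply: divr_ge0; [apply: le_trans st; apply: ltW|apply: ltW] | apply: b0].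
  move=> i x u ip Xx Uu.
  have st1 : 1 <= t / s by rewrite ler_pdivlMr // mul1r.
  set d := pnorm (x - (Pi i).1) (u - (Pi i).2).
  set a := Num.max 0 (ell x u - ell (Pi i).1 (Pi i).2).
  have a0 : 0 <= a by rewrite le_max lexx.
  have e1 : t / d = (t / s) * (s / d) by rewrite mulrA divfK // gt_eqF.
  apply: (@le_trans _ _ ((t / s) * bterm ell Pi i x u s)); last first.
    apply: ler_wpM2l; first by apply: le_trans st1.
    exact: bterm_le.
  rewrite /bterm -/d -/a e1 (mulrCA (t / s) a).
  apply: ler_wpM2l => //.
  exact: min1_scale.
split.
  move=> s t st; apply: bub => // i x u ip Xx Uu.
  apply: le_trans (bterm_le i x u t ip Xx Uu).
  rewrite /bterm; apply: ler_wpM2l; first by rewrite le_max lexx.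
  rewrite le_min !ge_min lexx /= (ler_wpM2r _ st) ?orbT //.
  by rewrite invr_ge0 pnorm_ge0.
move=> i x u e ip Xx Uu hd.
have [d0|dpos] := eqVneq (pnorm (x - (Pi i).1) (u - (Pi i).2)) 0.
  have [hx hu] := pnorm_eq0 _ _ _ _ _ d0.
  move/eqP: hx; rewrite subr_eq0 => /eqP ->.
  move/eqP: hu; rewrite subr_eq0 => /eqP ->.
  have := b0 e; lra.
have dp : 0 < pnorm (x - (Pi i).1) (u - (Pi i).2) by rewrite lt_def dpos pnorm_ge0.
have := bterm_le i x u e ip Xx Uu; rewrite /bterm.
have -> : Num.min 1 (e / pnorm (x - (Pi i).1) (u - (Pi i).2)) = 1.
  by apply/min_idPl; rewrite ler_pdivlMr // mul1r.
rewrite mulr1 => h.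
have h2 : ell x u - ell (Pi i).1 (Pi i).2 <= Num.max 0 (ell x u - ell (Pi i).1 (Pi i).2).
  by rewrite le_max lexx orbT.
lra.
Qed.

Lemma beta_small (R : realType) (n m : nat) (ell : 'rV[R]_n -> 'rV[R]_m -> R)
  (X : set 'rV[R]_n) (U : set 'rV[R]_m) (p : nat)
  (Pi : nat -> 'rV[R]_n * 'rV[R]_m) (L : R) :
  0 <= L ->
  (forall x u, X x -> U u -> 0 <= ell x u) ->
  (forall x u, X x -> U u -> ell x u <= L) ->
  (forall i, (i < p)%N -> X (Pi i).1 /\ U (Pi i).2) ->
  {within X `*` U, continuous (fun z : 'rV[R]_n * 'rV[R]_m => ell z.1 z.2)} ->
  forall eta, 0 < eta -> exists2 rho, 0 < rho &
    forall y, y <= rho -> beta ell X U p Pi y <= eta.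
Proof.
move=> L0 ge0 leL hPi hc eta eta0.
have [hs [b0 [bL [bneg [bsc [bmon bbd]]]]]] :=
  @beta_props _ _ _ ell X U p Pi L L0 ge0 leL hPi.
have [del del0 Hdel] : exists2 d, 0 < d & forall i, (i < p)%N -> forall x u, X x -> U u ->
   pnorm (x - (Pi i).1) (u - (Pi i).2) < d -> `|ell x u - ell (Pi i).1 (Pi i).2| < eta.
  apply: (@fin_delta R p (fun i d => forall x u, X x -> U u ->
   pnorm (x - (Pi i).1) (u - (Pi i).2) < d -> `|ell x u - ell (Pi i).1 (Pi i).2| < eta)).
- move=> i d d' _ dd' H x u Xx Uu h; apply: H => //; exact: lt_le_trans h dd'.
- move=> i ip; have [XP UP] := hPi i ip.
  have [d d0 H] := @cont_pt _ _ _ _ X U _ hc (Pi i) XP UP eta eta0.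
  by exists d => // x u Xx Uu h; exact: (H x u Xx Uu h).
have L1 : 0 < L + 1 by lra.
set k := eta / (L + 1).
have k0 : 0 < k by apply: divr_gt0.
exists (k * del); first exact: mulr_gt0.
move=> y hy; case: (lerP y 0) => y0.
  by rewrite bneg //; apply: ltW.
apply: ge_sup; first by exists 0; left.
move=> r [->|[i [x [u [ip Xx Uu ->]]]]]; first exact: ltW.
have [XP UP] := hPi i ip.
rewrite /bterm.
set d := pnorm (x - (Pi i).1) (u - (Pi i).2).
set a := Num.max 0 (ell x u - ell (Pi i).1 (Pi i).2).
have a0 : 0 <= a by rewrite le_max lexx.
have aL : a <= L.
  rewrite ge_max L0 /=; have := ge0 _ _ XP UP; have := leL _ _ Xx Uu; lra.
case: (ltP d del) => dd.
  have hl := Hdel i ip x u Xx Uu dd.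
  have aeta : a <= eta.
    rewrite ge_max (ltW eta0) /=; apply: le_trans (ler_norm _) (ltW hl).
  have h1 : Num.min 1 (y / d) <= 1 by rewrite ge_min lexx.
  exact: le_trans (ler_piMr a0 h1) aeta.
have dpos : 0 < d by apply: lt_le_trans del0 dd.
apply: (le_trans (ler_wpM2l a0 (min1_max0 _ _))).
have -> : Num.max 0 (y / d) = y / d.
  by apply/max_idPr; apply: divr_ge0; apply: ltW.
have yk : y / d <= k.
  rewrite ler_pdivrMr //.
  apply: le_trans hy _; apply: ler_wpM2l => //; exact: ltW.
apply: le_trans (ler_pM a0 _ aL yk) _.
  by apply: divr_ge0; apply: ltW.
rewrite /k mulrA ler_pdivrMr //.
nra.
Qed.

Lemma beta_cont (R : realType) (n m : nat) (ell : 'rV[R]_n -> 'rV[R]_m -> R)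
  (X : set 'rV[R]_n) (U : set 'rV[R]_m) (p : nat)
  (Pi : nat -> 'rV[R]_n * 'rV[R]_m) (L : R) :
  0 <= L ->
  (forall x u, X x -> U u -> 0 <= ell x u) ->
  (forall x u, X x -> U u -> ell x u <= L) ->
  (forall i, (i < p)%N -> X (Pi i).1 /\ U (Pi i).2) ->
  {within X `*` U, continuous (fun z : 'rV[R]_n * 'rV[R]_m => ell z.1 z.2)} ->
  continuous (beta ell X U p Pi).
Proof.
move=> L0 ge0 leL hPi hc.
have [hs [b0 [bL [bneg [bsc [bmon bbd]]]]]] :=
  @beta_props _ _ _ ell X U p Pi L L0 ge0 leL hPi.
move=> x; apply/cvgrPdist_lt => e e0.
case: (lerP x 0) => x0.
  have e2 : 0 < e / 2 by apply: divr_gt0.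
  have [rho rho0 Hr] := @beta_small _ _ _ ell X U p Pi L L0 ge0 leL hPi hc (e / 2) e2.
  apply/nbhs_normP; exists rho => //= t; rewrite /ball_ /= => ht.
  rewrite (bneg x x0) sub0r normrN ger0_norm; last exact: b0.
  have := ler_norm (t - x); rewrite distrC in ht => h.
  apply: le_lt_trans (Hr t _) _; first by lra.
  lra.
have L1 : 0 < L + 1 by lra.
set del := Num.min (x / 2) (e * x / (4 * (L + 1))).
have del0 : 0 < del.
  rewrite lt_min; apply/andP; split; first by apply: divr_gt0.
  by apply: divr_gt0; [apply: mulr_gt0|apply: mulr_gt0].
apply/nbhs_normP; exists del => //= t; rewrite /ball_ /= => ht.
have hd1 : `|x - t| < x / 2 by apply: lt_le_trans ht _; rewrite ge_min lexx.
have hd2 : `|x - t| * (4 * (L + 1)) < e * x.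
  rewrite -ltr_pdivlMr; last by apply: mulr_gt0.
  by apply: lt_le_trans ht _; rewrite ge_min lexx orbT.
have h1 := ler_norm (x - t).
have h2 := ler_norm (t - x).
rewrite distrC in h2.
have tpos : 0 < t by lra.
have bx0 := b0 x; have bt0 := b0 t; have bxL := bL x; have btL := bL t.
case: (lerP x t) => xt.
  have H1 := bsc x t x0 xt.
  have H1' : (beta ell X U p Pi t) * x <= t * (beta ell X U p Pi x).
    by rewrite -ler_pdivlMr // mulrAC.
  have Hm := bmon x t xt.
  rewrite distrC ger0_norm; last by rewrite subr_ge0.
  have P1 : 0 <= (t - x) * (L + 1 - (beta ell X U p Pi x)) by apply: mulr_ge0; lra.
  have P2 : 0 <= (t - x) * (beta ell X U p Pi x) by apply: mulr_ge0; lra.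
  nra.
have H1 := bsc t x tpos (ltW xt).
have H1' : (beta ell X U p Pi x) * t <= x * (beta ell X U p Pi t).
  by rewrite -ler_pdivlMr // mulrAC.
have Hm := bmon t x (ltW xt).
rewrite ger0_norm; last by rewrite subr_ge0.
have P1 : 0 <= (x - t) * (L + 1 - (beta ell X U p Pi t)) by apply: mulr_ge0; lra.
have P2 : 0 <= (x - t) * (beta ell X U p Pi t) by apply: mulr_ge0; lra.
nra.
Qed.

Lemma sum_rot (R : realType) (p : nat) (g : nat -> R) : (0 < p)%N ->
  \sum_(i < p) g (i.+1 %% p)%N = \sum_(i < p) g i.
Proof.
case: p => // p _.
rewrite big_ord_recr /= modnn big_ord_recl /= addrC; congr (_ + _).
apply: eq_bigr => i _; rewrite /bump /= add1n modn_small //.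
by rewrite ltnS ltn_ord.
Qed.

Lemma od_witness (R : realType) (n m p : nat) (Pi : nat -> 'rV[R]_n * 'rV[R]_m)
  (x : 'rV[R]_n) (u : 'rV[R]_m) (e : R) : (0 < p)%N ->
  orbit_dist p Pi x u <= e ->
  exists i, (i < p)%N /\ pnorm (x - (Pi i).1) (u - (Pi i).2) <= e.
Proof.
move=> p0 he.
have : exists i, (i < p)%N /\ pnorm (x - (Pi i).1) (u - (Pi i).2) <= orbit_dist p Pi x u.
  rewrite /orbit_dist; elim/big_rec: _ => [|k r _ [i [ip hi]]].
    by exists 0%N; split.
  case: (lerP (pnorm (x - (Pi k).1) (u - (Pi k).2)) r) => h.
    by exists k; split.
  by exists i; split.
move=> [i [ip hi]]; exists i; split => //; exact: le_trans hi he.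
Qed.

Theorem lemma24 (R : realType) (n m : nat)
  (f : 'rV[R]_n -> 'rV[R]_m -> 'rV[R]_n) (ell : 'rV[R]_n -> 'rV[R]_m -> R)
  (X : set 'rV[R]_n) (U : set 'rV[R]_m)
  (pstar : nat) (Pistar : nat -> 'rV[R]_n * 'rV[R]_m)
  (* standing assumptions *)
  (ell_ge0 : forall x u, X x -> U u -> 0 <= ell x u)
  (Pistar_feas : feas_orbit f X U pstar Pistar)
  (Pistar_opt : avg_cost ell pstar Pistar = ell_star f X U ell)
  (* (A1) *)
  (A1_f : {within X `*` U, continuous (fun z : 'rV[R]_n * 'rV[R]_m => f z.1 z.2)})
  (A1_ell : {within X `*` U, continuous (fun z : 'rV[R]_n * 'rV[R]_m => ell z.1 z.2)})
  (A1_X : compact X) (A1_U : compact U)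
  (* (A3) *)
  (A3 : exists (lam : 'rV[R]_n -> R) (lambar : R) (alpha : R -> R),
     (forall x, X x -> `|lam x| <= lambar) /\ Kinf alpha /\
     (forall x u, X x -> U u -> X (f x u) ->
        ell x u - ell_star f X U ell + lam x - lam (f x u)
          >= alpha (orbit_dist pstar Pistar x u))) :
  exists alpha1 : R -> R, Kinf alpha1 /\
    forall (eps : R), 0 < eps ->
    forall (T : nat) (xh : 'rV[R]_n) (uh : nat -> 'rV[R]_m),
      X xh -> admissible f X U T xh uh ->
      (forall k, (k < T)%N -> orbit_dist pstar Pistar (traj f uh xh k) (uh k) <= eps) ->
      \sum_(k < T) ell (traj f uh xh k) (uh k)
        <= (T%:R + pstar%:R - 1) * ell_star f X U ell + T%:R * alpha1 eps.
Proof.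
have [lam [lambar [alpha [Hlam [Kal Hdiss]]]]] := A3.
case: Pistar_feas => p0 [hPi hnext].
set ls := ell_star f X U ell.
rewrite -/ls in Hdiss Pistar_opt.
have pn0 : pstar%:R != 0 :> R by rewrite pnatr_eq0 -lt0n.
have sumPi : \sum_(k < pstar) ell (Pistar k).1 (Pistar k).2 = pstar%:R * ls.
  by rewrite -Pistar_opt /avg_cost mulrA divff ?mul1r.
have ls0 : 0 <= ls.
  rewrite -Pistar_opt /avg_cost; apply: mulr_ge0; first by rewrite invr_ge0 ler0n.
  apply: sumr_ge0 => i _; have [XP UP] := hPi i (ltn_ord i); exact: ell_ge0.
have al0 : forall t, 0 <= t -> 0 <= alpha t.
  case: Kal => a0 _ amono _ t t0.
  case: (eqVneq t 0) => [->|tn]; first by rewrite a0.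
  rewrite -a0; apply: ltW; apply: amono; rewrite ?in_itv /= ?lexx ?t0 //.
  by rewrite lt_def tn t0.
have od0 : forall x u, 0 <= orbit_dist pstar Pistar x u.
  move=> x u; rewrite /orbit_dist; apply: (big_ind (fun r => 0 <= r)).
  - exact: pnorm_ge0.
  - by move=> a b ha hb; rewrite le_min ha hb.
  - move=> i _; exact: pnorm_ge0.
have eq_i : forall i, (i < pstar)%N -> ell (Pistar i).1 (Pistar i).2 =
    ls + lam (Pistar (i.+1 %% pstar)%N).1 - lam (Pistar i).1.
  pose E := fun i : 'I_pstar => (ell (Pistar i).1 (Pistar i).2 + lam (Pistar i).1)
     - (ls + lam (Pistar (i.+1 %% pstar)%N).1).
  have E0 : forall i : 'I_pstar, 0 <= E i.
    move=> i; have [XP UP] := hPi i (ltn_ord i).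
    have Xf : X (f (Pistar i).1 (Pistar i).2).
      by rewrite -hnext //; exact: (hPi _ (ltn_pmod _ p0)).1.
    have := Hdiss _ _ XP UP Xf; rewrite -hnext //.
    have := al0 _ (od0 (Pistar i).1 (Pistar i).2); rewrite /E; lra.
  have Esum : \sum_(i < pstar) E i = 0.
    have cst : \sum_(i < pstar) ls = pstar%:R * ls.
      by rewrite sumr_const card_ord mulr_natl.
    rewrite /E sumrB !big_split /= sumPi cst.
    rewrite (@sum_rot _ _ (fun i => lam (Pistar i).1) p0).
    lra.
  move=> i ip; have := psumr_eq0P (fun i _ => E0 i) Esum (i := Ordinal ip) isT.
  rewrite /E /=; lra.
pose mu := fun t : nat => lam (Pistar (t %% pstar)%N).1.
pose gg := fun t : nat => ell (Pistar (t %% pstar)%N).1 (Pistar (t %% pstar)%N).2.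
have mu_step : forall t, mu t.+1 = mu t + gg t - ls.
  move=> t; rewrite /mu /gg (eq_i _ (ltn_pmod t p0)).
  have -> : ((t %% pstar).+1 %% pstar = t.+1 %% pstar)%N.
    by rewrite -addn1 modnDml addn1.
  lra.
have mu_tele : forall t k, mu (t + k)%N = mu t + \sum_(r < k) gg (t + r)%N - k%:R * ls.
  move=> t; elim=> [|k IH]; first by rewrite addn0 big_ord0 mul0r; lra.
  rewrite addnS mu_step IH big_ord_recr /= -natr1; lra.
have mu_per : forall t, mu (t + pstar)%N = mu t by move=> t; rewrite /mu modnDr.
have gg0 : forall t, 0 <= gg t.
  move=> t; have [XP UP] := hPi _ (ltn_pmod t p0); exact: ell_ge0.
have mu_diff : forall t s, (s <= pstar)%N -> mu (t + s)%N - mu t <= (pstar - s)%:R * ls.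
  move=> t s sp; have := mu_tele (t + s)%N (pstar - s)%N.
  rewrite -addnA subnKC // mu_per.
  have : 0 <= \sum_(r < pstar - s) gg (t + s + r)%N by apply: sumr_ge0 => r _.
  lra.
have lam_diff : forall a b, (a < pstar)%N -> (b < pstar)%N ->
    lam (Pistar a).1 - lam (Pistar b).1 <= (pstar%:R - 1) * ls.
  move=> a b ap bp.
  case: (eqVneq a b) => [->|ab].
    by rewrite subrr; apply: mulr_ge0 => //; rewrite subr_ge0 ler1n.
  have ma : lam (Pistar a).1 = mu a by rewrite /mu modn_small.
  have mb : lam (Pistar b).1 = mu b by rewrite /mu modn_small.
  have [s [s1 sp ms]] : exists s, [/\ (0 < s)%N, (s <= pstar)%N & mu (b + s)%N = mu a].
    case: (leqP b a) => ba.
      exists (a - b)%N; split; [ | lia | by rewrite subnKC].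
      move/eqP: ab => ab; lia.
    exists (a + pstar - b)%N; split.
    - lia.
    - lia.
    - by rewrite subnKC ?mu_per //; lia.
  have := mu_diff b s sp; rewrite ma mb ms natrB // => h.
  apply: le_trans h _; apply: ler_wpM2r => //.
  by rewrite lerB // ler1n.
have [L [L0 leL]] : exists L, 0 <= L /\ forall x u, X x -> U u -> ell x u <= L.
  have cpt := continuous_compact A1_ell (compact_setX A1_X A1_U).
  have [M [_ HM]] := compact_bounded cpt.
  exists (`|M| + 1); split; first by rewrite addr_ge0 // normr_ge0.
  move=> x u Xx Uu.
  have h : `|M| + 1 > M by have := ler_norm M; lra.
  have := HM _ h (ell x u) (ex_intro2 _ _ (x, u) (conj Xx Uu) erefl).
  rewrite /= => hh; apply: le_trans (ler_norm _) hh.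
have [ds ds0 Hds] : exists2 d, 0 < d & forall a, (a < pstar)%N -> forall b, (b < pstar)%N ->
    (Pistar a).1 != (Pistar b).1 -> d <= `|(Pistar a).1 - (Pistar b).1|.
  apply: (@fin_delta R pstar (fun a d => forall b, (b < pstar)%N ->
    (Pistar a).1 != (Pistar b).1 -> d <= `|(Pistar a).1 - (Pistar b).1|)).
    move=> a d d' _ dd' H b bp hne; exact: le_trans dd' (H b bp hne).
  move=> a ap.
  apply: (@fin_delta R pstar (fun b d =>
    (Pistar a).1 != (Pistar b).1 -> d <= `|(Pistar a).1 - (Pistar b).1|)).
    move=> b d d' _ dd' H hne; exact: le_trans dd' (H hne).
  move=> b bp; case: (eqVneq (Pistar a).1 (Pistar b).1) => [->|hne].
    by exists 1 => //; rewrite eqxx.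
  exists `|(Pistar a).1 - (Pistar b).1| => //.
  by rewrite normr_gt0 subr_eq0.
have ds2 : 0 < ds / 2 by apply: divr_gt0.
have [df df0 Hdf] : exists2 d, 0 < d & forall i, (i < pstar)%N -> forall x u, X x -> U u ->
    pnorm (x - (Pistar i).1) (u - (Pistar i).2) < d ->
    `|f x u - f (Pistar i).1 (Pistar i).2| < ds / 2.
  apply: (@fin_delta R pstar (fun i d => forall x u, X x -> U u ->
    pnorm (x - (Pistar i).1) (u - (Pistar i).2) < d ->
    `|f x u - f (Pistar i).1 (Pistar i).2| < ds / 2)).
    move=> i d d' _ dd' H x u Xx Uu h; apply: H => //; exact: lt_le_trans h dd'.
  move=> i ip; have [XP UP] := hPi i ip.
  have [d d0 H] := @cont_pt _ _ _ _ X U _ A1_f (Pistar i) XP UP (ds / 2) ds2.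
  by exists d => // x u Xx Uu h; exact: (H x u Xx Uu h).
set d0 := Num.min df (ds / 2).
have d00 : 0 < d0 by rewrite lt_min df0 ds2.
set c := (L + 1) / d0.
have c0 : 0 < c by apply: divr_gt0 => //; lra.
have hPi' : forall i, (i < pstar)%N -> X (Pistar i).1 /\ U (Pistar i).2 by [].
have [hs [b0 [bL [bneg [bsc [bmon bbd]]]]]] :=
  @beta_props _ _ _ ell X U pstar Pistar L L0 ell_ge0 leL hPi'.
have bc := @beta_cont _ _ _ ell X U pstar Pistar L L0 ell_ge0 leL hPi' A1_ell.
exists (fun e => beta ell X U pstar Pistar e + c * e); split.
  split.
  - by rewrite bneg // mulr0 addr0.
  - apply: continuous_subspaceT => x.
    exact: (continuousD (bc x) (@mulrl_continuous _ c x)).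
  - move=> s t _ _ st.
    have := bmon s t (ltW st); have : c * s < c * t by rewrite ltr_pM2l.
    lra.
  - move=> M; exists (Num.max 0 (M / c)); split; first by rewrite le_max lexx.
    have hm : M / c <= Num.max 0 (M / c) by rewrite le_max lexx orbT.
    have := b0 (Num.max 0 (M / c)).
    have : M <= c * Num.max 0 (M / c).
      by rewrite -ler_pdivrMl // mulrC.
    lra.
move=> e e0 T xh uh Xh [admU admX] hdist.
have Tp : 0 <= T%:R + pstar%:R - 1 :> R.
  have : 1 <= pstar%:R :> R by rewrite ler1n.
  have : 0 <= T%:R :> R by rewrite ler0n.
  lra.
have T0 : 0 <= T%:R :> R by rewrite ler0n.
have RHS0 : 0 <= (T%:R + pstar%:R - 1) * ls by apply: mulr_ge0.
case: (lerP d0 e) => ed.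
  have h1 : \sum_(k < T) ell (traj f uh xh k) (uh k) <= T%:R * L.
    apply: (@le_trans _ _ (\sum_(k < T) L)).
      apply: ler_sum => k _; apply: leL; [exact: admX (ltnW (ltn_ord k)) | exact: admU (ltn_ord k)].
    by rewrite sumr_const card_ord mulr_natl.
  have h2 : L <= beta ell X U pstar Pistar e + c * e.
    have : L + 1 <= c * e by rewrite /c mulrAC ler_pdivlMr // ler_wpM2l //; lra.
    have := b0 e; lra.
  have h3 : T%:R * L <= T%:R * (beta ell X U pstar Pistar e + c * e) by apply: ler_wpM2l.
  lra.
case: T admU admX hdist T0 Tp RHS0 => [|T] admU admX hdist T0 Tp RHS0.
  by rewrite big_ord0 mul0r addr0.
have : forall k, exists i, (k < T.+1)%N -> (i < pstar)%N /\
    pnorm (traj f uh xh k - (Pistar i).1) (uh k - (Pistar i).2) <= e.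
  move=> k; case: (ltnP k T.+1) => kT; last by exists 0%N.
  have [i [ip hi]] := @od_witness _ _ _ _ Pistar (traj f uh xh k) (uh k) e p0 (hdist k kT).
  by exists i.
case/choice => idx Hidx.
have next : forall k, (k.+1 < T.+1)%N -> (Pistar (idx k.+1)).1 = (Pistar ((idx k).+1 %% pstar)%N).1.
  move=> k kT.
  have kT' : (k < T.+1)%N by apply: ltn_trans kT.
  have [ik hk] := Hidx k kT'.
  have [ik1 hk1] := Hidx k.+1 kT.
  case: (eqVneq (Pistar (idx k.+1)).1 (Pistar ((idx k).+1 %% pstar)%N).1) => // hne.
  have H1 := Hds _ ik1 _ (ltn_pmod _ p0) hne.
  have n1 := le_trans (pnorm_ge1 _ _ _ _ _) hk1.
  have dfd : d0 <= df by rewrite ge_min lexx.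
  have n2 := Hdf (idx k) ik _ _ (admX k (ltnW kT')) (admU k kT')
     (le_lt_trans hk (lt_le_trans ed dfd)).
  rewrite -hnext // in n2.
  have := ler_distD (f (traj f uh xh k) (uh k)) (Pistar (idx k.+1)).1 (Pistar ((idx k).+1 %% pstar)%N).1.
  rewrite (distrC (Pistar (idx k.+1)).1 (f (traj f uh xh k) (uh k))).
  have : d0 <= ds / 2 by rewrite ge_min lexx orbT.
  rewrite /= in n1.
  move=> hA hB; exfalso; lra.
have step : \sum_(k < T.+1) ell (traj f uh xh k) (uh k) <=
    \sum_(k < T.+1) (ell (Pistar (idx k)).1 (Pistar (idx k)).2 + beta ell X U pstar Pistar e).
  apply: ler_sum => k _; have [ik hk] := Hidx k (ltn_ord k).
  exact: bbd ik (admX k (ltnW (ltn_ord k))) (admU k (ltn_ord k)) hk.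
have S2 : \sum_(k < T.+1) (ell (Pistar (idx k)).1 (Pistar (idx k)).2 + beta ell X U pstar Pistar e)
    = \sum_(k < T.+1) ell (Pistar (idx k)).1 (Pistar (idx k)).2 + T.+1%:R * beta ell X U pstar Pistar e.
  by rewrite big_split /= sumr_const card_ord mulr_natl.
have W : forall K, (K < T.+1)%N -> \sum_(k < K.+1) ell (Pistar (idx k)).1 (Pistar (idx k)).2 =
    K.+1%:R * ls + lam (Pistar ((idx K).+1 %% pstar)%N).1 - lam (Pistar (idx 0%N)).1.
  elim=> [|K IH] KT.
    rewrite big_ord_recr big_ord0 /= add0r (eq_i _ (Hidx 0%N KT).1) mul1r; lra.
  rewrite big_ord_recr /= IH; last by apply: ltnW.
  rewrite (eq_i _ (Hidx K.+1 KT).1) (next K KT).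
  have e2 : (K.+2)%:R = (K.+1)%:R + 1 :> R by rewrite natr1.
  rewrite e2; lra.
have hW := W T (ltnSn T).
have hd := lam_diff ((idx T).+1 %% pstar)%N (idx 0%N) (ltn_pmod _ p0) (Hidx 0%N (ltn0Sn T)).1.
have ce : 0 <= T.+1%:R * (c * e) by apply: mulr_ge0 => //; apply: mulr_ge0; apply: ltW.
rewrite S2 hW in step.
lra.
Qed.
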